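(* Let $C$ be a field, $W$ a $C$-vector space of dimension $r$, and let $W_{i,j}$ ($i=1,\dots,n$; $j=1,\dots,\ell$, with $\ell\leq r$) be subspaces of $W$, given by bases, such that $W=\bigoplus_{j=1}^{\ell}W_{i,j}$ for each $i=1,\dots,n$. For a tuple $\mathbf k=(k_1,\dots,k_m)$ with $m\le n$ write $W_{\mathbf k}:=\bigcap_{i=1}^{m}W_{i,k_i}$. Consider the following algorithm: (1) set $U:=\{(j): 1\le j\le \ell,\ W_{1,j}\neq\{0\}\}$; (2) for $i=2,\dots,n$: set $U_{\mathrm{new}}:=\emptyset$; for each $j=1,\dots,\ell$ and each $\mathbf k\in U$, if $W_{\mathbf k}\cap W_{i,j}\neq\{0\}$ then add the tuple $(\mathbf k,j)$ (i.e. $\mathbf k$ with $j$ appended) to $U_{\mathrm{new}}$; afterwards set $U:=U_{\mathrm{new}}$; (3) return $U$. Then the algorithm is correct, i.e. it returns exactly the set of all tuples $\mathbf j=(j_1,\dots,j_n)\in\{1,\dots,\ell\}^n$ with $\bigcap_{i=1}^n W_{i,j_i}\neq\{0\}$, and, if bases of the spaces $W_{\mathbf k}$ for $\mathbf k\in U$ are cached (so that a basis of $W_{(\mathbf k,j)}=W_{\mathbf k}\cap W_{i,j}$ is available from the intersection test), it needs no more than $8nr^4$ operations in $C$.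
   Context: Operations are counted as arithmetic operations in $C$, with the convention that the intersection of two subspaces of $W$ of dimensions $d_1,d_2$ (given by bases, yielding a basis of the intersection) is computed, e.g. by Gaussian elimination, using no more than $\min(r,d_1+d_2)^2\max(r,d_1+d_2)$ operations in $C$. *)

(* Defs.v *)
From mathcomp Require Import all_boot all_order all_algebra.
Set Implicit Arguments. Unset Strict Implicit. Unset Printing Implicit Defensive.
Import GRing.Theory.
Local Open Scope ring_scope.

Section IntersectionAlgorithm.
Variables (C : fieldType) (r n l : nat).
(* The ambient space W is the row space 'rV[C]_r; a subspace is represented
   by a matrix whose rows span it (its given basis). W i j is W_{i+1,j+1}. *)
Variable W : 'I_n -> 'I_l -> 'M[C]_r.

(* W at a natural-number row index (0 outside range; never used there). *)
Definition Wat (i : nat) (j : 'I_l) : 'M[C]_r :=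
  if insub i is Some i' then W i' j else 0.

Fixpoint Wk_from (i : nat) (k : seq 'I_l) : 'M[C]_r :=
  match k with
  | [::] => 1%:M
  | j :: k' => (Wat i j :&: Wk_from i.+1 k')%MS
  end.
Definition Wk (k : seq 'I_l) : 'M[C]_r := Wk_from 0 k.

(* cost of intersecting subspaces of dimensions d1, d2 *)
Definition icost (d1 d2 : nat) : nat :=
  (minn r (d1 + d2) ^ 2 * maxn r (d1 + d2))%N.

(* step (1): no arithmetic needed (a given basis is empty or not) *)
Definition U0 : seq (seq 'I_l) :=
  [seq [:: j] | j <- enum 'I_l & (Wat 0 j != 0)%MS].

(* step (2) for (0-indexed) row i: new U, and its cost, where for each j and
   each k in U the cached basis of W_k is intersected with the basis of W_{i,j}. *)
Definition newU (i : nat) (U : seq (seq 'I_l)) : seq (seq 'I_l) :=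
  [seq rcons k j | j <- enum 'I_l,
                   k <- [seq k <- U | (Wk k :&: Wat i j != 0)%MS]].
Definition stepcost (i : nat) (U : seq (seq 'I_l)) : nat :=
  (\sum_(j <- enum 'I_l) \sum_(k <- U) icost (\rank (Wk k)) (\rank (Wat i j)))%N.

Definition step (s : seq (seq 'I_l) * nat) (i : nat) :=
  (newU i s.1, (s.2 + stepcost i s.1)%N).

(* run: returns (U, number of field operations used) *)
Definition algo : seq (seq 'I_l) * nat := foldl step (U0, 0%N) (iota 1 n.-1).
End IntersectionAlgorithm.

(* Main.v *)
Require Import Defs.
From mathcomp Require Import all_boot all_order all_algebra zify.
Import GRing.Theory.
Local Open Scope ring_scope.

Lemma direct_cap_rank (C : fieldType) (r l : nat) (A : 'M[C]_r) (B : 'I_l -> 'M[C]_r) :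
  mxdirect (\sum_(j < l) B j)%MS ->
  (\sum_(j < l) \rank (A :&: B j) <= \rank A)%N.
Proof.
move=> dB.
have dC : mxdirect (\sum_(j < l) (A :&: B j))%MS.
  apply/mxdirect_sumsP => i _; apply/eqP; rewrite -submx0.
  have h := mxdirect_sumsP dB i isT.
  apply: (submx_trans (n:=r) (B:=(B i :&: \sum_(j | true && (j != i)) B j)%MS)); last by rewrite h submx_refl.
  apply: capmxS; first exact: capmxSr.
  by apply/sumsmx_subP => j Pj; rewrite (sumsmx_sup j) // capmxSr.
move: dC; rewrite mxdirectE /= => /eqP <-.
apply: mxrankS; apply/sumsmx_subP => j _; exact: capmxSl.
Qed.

Lemma Wk_rcons (C : fieldType) (r n l : nat) (W : 'I_n -> 'I_l -> 'M[C]_r) s k j :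
  Wk_from W s (rcons k j) = (Wk_from W s k :&: Wat W (s + size k) j)%MS.
Proof.
elim: k s => [|a k IH] s /=; first by rewrite addn0 capmx1 cap1mx.
by rewrite IH capmxA addSnnS.
Qed.

Lemma icost_le r d e : (icost r d e <= r ^ 2 * (d + e))%N.
Proof.
rewrite /icost; case: (leqP r (d + e)) => h //.
move: h; set s := (d + e)%N => h; nia.
Qed.
Section Main.
Variables (C : fieldType) (r n l : nat) (W : 'I_n -> 'I_l -> 'M[C]_r).
Hypothesis hdirect : forall i : 'I_n, mxdirect (\sum_(j < l) W i j)%MS.
Hypothesis hl : (l <= r)%N.

Lemma sumWat i (A : 'M[C]_r) : (i < n)%N ->
  (\sum_(j <- enum 'I_l) \rank (A :&: Wat W i j) <= \rank A)%N.
Proof.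
move=> hi; rewrite big_enum /=.
rewrite (eq_bigr (fun j => \rank (A :&: W (Ordinal hi) j))) => [|j _].
  exact: direct_cap_rank.
by rewrite /Wat insubT.
Qed.

Lemma mem_newU i U k j :
  (rcons k j \in newU W i U) = (k \in U) && (Wk W k :&: Wat W i j != 0)%MS.
Proof.
apply/allpairsPdep/andP => [[j' [k' [_ hk' /rcons_inj [-> ->]]]] | [hk hc]].
  by move: hk'; rewrite mem_filter => /andP[-> ->].
by exists j, k; split; rewrite ?mem_enum // mem_filter hk hc.
Qed.

Lemma nil_newU i U : ([::] \in newU W i U) = false.
Proof.
apply/allpairsPdep => [[j' [k' [_ _ ]]]]; by case: k'.
Qed.

Lemma Wk1 j : Wk W [:: j] = Wat W 0 j.
Proof. by rewrite /Wk /= capmx1. Qed.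

Lemma inv m : (m < n)%N ->
  let s := foldl (step W) (U0 W, 0%N) (iota 1 m) in
  (forall js, (js \in s.1) = (size js == m.+1) && (Wk W js != 0)) /\
  (\sum_(k <- s.1) \rank (Wk W k) <= r)%N /\ (s.2 <= 2 * m * r ^ 4)%N.
Proof.
elim: m => [|m IH] hm.
  rewrite /=; split; [|split=> //].
    case=> [|j [|j' js]].
    - by apply/mapP => [[x _]].
    - rewrite mem_map; last by move=> ? ? [].
      by rewrite mem_filter mem_enum Wk1 andbT.
    - by apply/mapP => [[x _]].
  rewrite /U0 big_map big_filter big_mkcond /=.
  apply: (@leq_trans (\sum_(j <- enum 'I_l) \rank (1%:M :&: Wat W 0 j))%N).
    by apply: leq_sum => j _; case: ifP => _ //; rewrite Wk1 cap1mx.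
  by apply: leq_trans (sumWat 0 1%:M hm) _; rewrite mxrank1.
have hm' : (m < n)%N by apply: ltnW.
move: (IH hm'); rewrite -[m.+1]addn1 iotaD foldl_cat /= add1n.
case: (foldl _ _ _) => U c /= [memU [sumU costU]].
rewrite !addn1 in memU *.
have hE : (\sum_(j <- enum 'I_l) \rank (Wat W m.+1 j) <= r)%N.
  have := sumWat m.+1 1%:M hm; rewrite mxrank1.
  by under eq_bigr do rewrite cap1mx.
split; [|split].
- case/lastP => [|k j].
    by rewrite nil_newU.
  rewrite mem_newU memU size_rcons eqSS /Wk Wk_rcons add0n.
  case: eqP => hk //=.
  rewrite hk; case: (eqVneq (Wk_from W 0 k) 0) => h //=.
  apply/esym/negbTE; rewrite negbK -submx0.
  by apply: submx_trans (capmxSl _ _) _; rewrite /Wk in h; rewrite h submx0.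
- rewrite /newU big_allpairs_dep /=.
  apply: (@leq_trans (\sum_(j <- enum 'I_l) \sum_(k <- U) \rank (Wk W k :&: Wat W m.+1 j))%N).
    apply: leq_sum => j _; rewrite big_filter big_mkcond big_seq [X in (_ <= X)%N]big_seq.
    apply: leq_sum => k hk; case: ifP => _ //.
    by have := hk; rewrite memU => /andP[/eqP hs _]; rewrite /Wk Wk_rcons add0n hs.
  rewrite exchange_big /=; apply: leq_trans sumU; apply: leq_sum => k _; exact: sumWat.
- set D := (\sum_(k <- U) \rank (Wk W k))%N in sumU.
  set E := (\sum_(j <- enum 'I_l) \rank (Wat W m.+1 j))%N in hE.
  have h1 : (stepcost W m.+1 U <= r ^ 2 * \sum_(j <- enum 'I_l) \sum_(k <- U) (\rank (Wk W k) + \rank (Wat W m.+1 j)))%N.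
    rewrite /stepcost big_distrr /=; apply: leq_sum => j _.
    rewrite big_distrr /=; apply: leq_sum => k _; exact: icost_le.
  have h2 : (\sum_(j <- enum 'I_l) \sum_(k <- U) (\rank (Wk W k) + \rank (Wat W m.+1 j)) <= l * D + E * D)%N.
    under eq_bigr do rewrite big_split /=.
    rewrite big_split /=; apply: leq_add.
      by rewrite big_enum /= sum_nat_const card_ord.
    rewrite /E big_distrl /=; apply: leq_sum => j _.
    rewrite /D big_distrr /= big_seq [X in (_ <= X)%N]big_seq; apply: leq_sum => k hk.
    apply: leq_pmulr; rewrite lt0n mxrank_eq0.
    by move: hk; rewrite memU => /andP[_].
  have h3 : (l * D + E * D <= 2 * (r * r))%N by nia.
  have h4 : (stepcost W m.+1 U <= r ^ 2 * (2 * (r * r)))%N.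
    by apply: (leq_trans h1); rewrite leq_mul2l (leq_trans h2 h3) orbT.
  nia.
Qed.
End Main.

Theorem theorem1 (C : fieldType) (r n l : nat) (W : 'I_n -> 'I_l -> 'M[C]_r)
  (hn : (0 < n)%N) (hl : (l <= r)%N)
  (hdirect : forall i : 'I_n, mxdirect (\sum_(j < l) W i j)%MS)
  (hspan : forall i : 'I_n, (\sum_(j < l) W i j == 1%:M)%MS) :
  (forall js : seq 'I_l,
      (js \in (algo W).1) = (size js == n) && (Wk W js != 0)%MS)
  /\ ((algo W).2 <= 8 * n * r ^ 4)%N.
Proof.
have hn' : (n.-1 < n)%N by rewrite ltn_predL.
have [h1 [_ h3]] := @inv C r n l W hdirect hl _ hn'.
rewrite /algo; split.
  by move=> js; rewrite h1 prednK.
apply: leq_trans h3 _.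
have hp : (n.-1 <= n)%N := leq_pred n.
rewrite -!mulnA leq_mul // leq_mul //.
Qed.
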